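(* Let $0<\alpha<\pi/4$, $\beta=\pi/4$, and let $F,G_1,G_2$, $X_{\pm\pm}$, $s_{\max}$, $v$ be as in the context. Let $\theta(\alpha)=\arcsin\left(\frac{-2\sqrt2\sin\alpha\cos\alpha}{1+\cos^2\alpha}\right)$ and write $c=\cos\theta(\alpha)$, $\sigma=\sin\theta(\alpha)$. Then $$e^{v(s_{\max})X_{++}}=\begin{pmatrix}0&-1&0\\ c&0&\sigma\\ -\sigma&0&c\end{pmatrix},\quad e^{v(s_{\max})X_{+-}}=\begin{pmatrix}0&-c&-\sigma\\ 1&0&0\\ 0&-\sigma&c\end{pmatrix},$$ $$e^{v(s_{\max})X_{--}}=\begin{pmatrix}0&-1&0\\ c&0&-\sigma\\ \sigma&0&c\end{pmatrix},\quad e^{v(s_{\max})X_{-+}}=\begin{pmatrix}0&-c&\sigma\\ 1&0&0\\ 0&\sigma&c\end{pmatrix}.$$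
   Context: $F=\cos\alpha\begin{pmatrix}0&-1&0\\1&0&0\\0&0&0\end{pmatrix}$, $G_1=\sin\alpha\sin\beta\begin{pmatrix}0&0&0\\0&0&-1\\0&1&0\end{pmatrix}$, $G_2=\sin\alpha\cos\beta\begin{pmatrix}0&0&-1\\0&0&0\\1&0&0\end{pmatrix}$, and $X_{ab}=F+aG_1+bG_2$ for $a,b\in\{+1,-1\}$ (written $X_{++},X_{+-},X_{--},X_{-+}$). $s_{\max}=\arccos\left(-\frac{\sin^2\alpha}{1+\cos^2\alpha}\right)$. For $s\in[0,s_{\max}]$, $v(s)=\arccos\left[\frac{d-A(s)-B(s)-C(s)}{e-A(s)+B(s)}\right]$ with $A(s)=8\cos\alpha\sin^2\alpha\sin s$, $B(s)=2\sin^2(2\alpha)\cos s$, $C(s)=4\sin^4\alpha\cos(2s)$, $d=\sin^2(2\alpha)$, $e=5+2\cos2\alpha+\cos4\alpha$; this is the duration of interior bang arcs of normal extremals of $\dot x=(F+u_1G_1+u_2G_2)x$ on $S^2$ starting from $(0,0,1)$ whose first bang arc has duration $s$. *)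

(* Defs.v *)
From HB Require Import structures.
From mathcomp Require Import all_boot all_order all_algebra.
From mathcomp Require Import all_classical all_reals all_analysis.
Set Implicit Arguments. Unset Strict Implicit. Unset Printing Implicit Defensive.
Import Order.TTheory GRing.Theory Num.Theory.
Import numFieldNormedType.Exports.
Local Open Scope classical_set_scope.
Local Open Scope ring_scope.

Section Defs.
Variable R : realType.

Definition expm_partial (A : 'M[R]_3) (N : nat) : 'M[R]_3 :=
  \sum_(k < N) (k`!%:R)^-1 *: (A ^+ k).

Definition is_expm (A M : 'M[R]_3) : Prop :=
  expm_partial A @ \oo --> M.

Definition mat3 (a b c d e f g h i : R) : 'M[R]_3 :=
  \matrix_(p < 3, q < 3)
    nth 0 (nth [::] [:: [:: a; b; c]; [:: d; e; f]; [:: g; h; i]] p) q.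

Definition Fm (alpha : R) : 'M[R]_3 :=
  cos alpha *: mat3 0 (-1) 0  1 0 0  0 0 0.
Definition G1m (alpha beta : R) : 'M[R]_3 :=
  (sin alpha * sin beta) *: mat3 0 0 0  0 0 (-1)  0 1 0.
Definition G2m (alpha beta : R) : 'M[R]_3 :=
  (sin alpha * cos beta) *: mat3 0 0 (-1)  0 0 0  1 0 0.

(* X_{ab} = F + a G1 + b G2, with a, b intended in {+1,-1} *)
Definition Xm (alpha beta a b : R) : 'M[R]_3 :=
  Fm alpha + a *: G1m alpha beta + b *: G2m alpha beta.

Definition smax (alpha : R) : R :=
  acos (- (sin alpha ^+ 2 / (1 + cos alpha ^+ 2))).

Definition vA (alpha s : R) : R := 8 * cos alpha * sin alpha ^+ 2 * sin s.
Definition vB (alpha s : R) : R := 2 * sin (2 * alpha) ^+ 2 * cos s.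
Definition vC (alpha s : R) : R := 4 * sin alpha ^+ 4 * cos (2 * s).
Definition vd (alpha : R) : R := sin (2 * alpha) ^+ 2.
Definition ve (alpha : R) : R := 5 + 2 * cos (2 * alpha) + cos (4 * alpha).

Definition vfun (alpha s : R) : R :=
  acos ((vd alpha - vA alpha s - vB alpha s - vC alpha s)
        / (ve alpha - vA alpha s + vB alpha s)).

Definition theta (alpha : R) : R :=
  asin ((- (2 * Num.sqrt 2 * sin alpha * cos alpha)) / (1 + cos alpha ^+ 2)).

End Defs.

(* Main.v *)
Require Import Defs.
From HB Require Import structures.
From mathcomp Require Import all_boot all_order all_algebra.
From mathcomp Require Import all_classical all_reals all_analysis.
From mathcomp Require Import ring lra.
Import Order.TTheory GRing.Theory Num.Theory.
Import numFieldNormedType.Exports.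
Local Open Scope ring_scope.

Lemma powK (R : realType) (n : nat) (K : 'M[R]_3) : K ^+ 3 = - K ->
  K ^+ n = ((odd n)%:R * (-1) ^+ n.-1./2) *: K
           - ((~~ odd n)%:R * (-1) ^+ n./2) *: K ^+ 2 + (n == 0)%:R *: (1 + K ^+ 2).
Proof.
move=> K3.
case: n => [|n]; first by rewrite /= !expr0 !mul0r !mul1r scale0r !scale1r add0r addrC addrK.
elim: n => [|n IH]; first by rewrite /= !expr0 expr1 !mul0r mul1r !scale0r subr0 addr0 scale1r.
rewrite exprSr IH /= !scale0r !addr0 mulrBl -!scalerAl -exprSr K3 scalerN opprK.
rewrite negbK /= addrC; congr (_ + _); rewrite -scaleNr; congr (_ *: _).
by rewrite exprS mulN1r mulrN opprK.
Qed.

Lemma expm_rod (R : realType) (K : 'M[R]_3) (t : R) : K ^+ 3 = - K ->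
  is_expm (t *: K) (sin t *: K - cos t *: K ^+ 2 + (1 + K ^+ 2)).
Proof.
move=> K3.
have term n : (n`!%:R)^-1 *: (t *: K) ^+ n =
   sin_coeff t n *: K - cos_coeff t n *: K ^+ 2 + (n == 0)%:R *: (1 + K ^+ 2).
  rewrite exprZn (@powK R n K K3) !scalerDr !scalerN !scalerA /=.
  congr (_ *: _ + - (_ *: _) + (_%:A + _ *: _)).
  - by rewrite /sin_coeff /=; ring.
  - by rewrite /cos_coeff /= -exprnP; ring.
  - by case: n => [|n] /=; rewrite ?expr0 ?mulr0 // invr1 !mulr1.
  - by case: n => [|n] /=; rewrite ?expr0 ?mulr0 // invr1 !mulr1.
have part n : expm_partial (t *: K) n.+1 =
   series (sin_coeff t) n.+1 *: K - series (cos_coeff t) n.+1 *: K ^+ 2 + (1 + K ^+ 2).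
  rewrite /expm_partial /series /=.
  under eq_bigr do rewrite term.
  rewrite big_split big_split /= sumrN -!scaler_suml !big_mkord.
  congr (_ + _); rewrite big_ord_recl big1 /= ?addr0 ?scale1r //.
rewrite /is_expm -cvg_shiftS.
have -> : [sequence expm_partial (t *: K) n.+1]_n = (fun n =>
   series (sin_coeff t) n.+1 *: K - series (cos_coeff t) n.+1 *: K ^+ 2 + (1 + K ^+ 2)).
  by apply/funext => n /=; rewrite part.
apply: cvgD; last exact: cvg_cst.
apply: cvgB; apply: cvgZr_tmp; rewrite (cvg_shiftS (series _)).
  by rewrite unlock; exact: is_cvg_series_sin_coeff.
by rewrite unlock; exact: is_cvg_series_cos_coeff.
Qed.
Ltac mx3 := apply/matrixP; move=> [[|[|[|?]]] ?] [[|[|[|?]]] ?]; rewrite !mxE //.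

Lemma mat3_add (R : realType) a b c d e f g h i a' b' c' d' e' f' g' h' i' :
  mat3 a b c d e f g h i + mat3 a' b' c' d' e' f' g' h' i' =
  mat3 (a + a') (b + b') (c + c') (d + d') (e + e') (f + f') (g + g') (h + h') (i + i') :> 'M[R]_3.
Proof. by mx3. Qed.

Lemma mat3_scale (R : realType) (k : R) a b c d e f g h i :
  k *: mat3 a b c d e f g h i =
  mat3 (k * a) (k * b) (k * c) (k * d) (k * e) (k * f) (k * g) (k * h) (k * i).
Proof. by mx3. Qed.

Lemma mat3_opp (R : realType) (a b c d e f g h i : R) :
  - mat3 a b c d e f g h i = mat3 (-a) (-b) (-c) (-d) (-e) (-f) (-g) (-h) (-i).
Proof. by mx3. Qed.

Lemma mat3_one (R : realType) : 1 = mat3 1 0 0 0 1 0 0 0 1 :> 'M[R]_3.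
Proof. by mx3. Qed.

Lemma mat3_mul (R : realType) a b c d e f g h i a' b' c' d' e' f' g' h' i' :
  mat3 a b c d e f g h i * mat3 a' b' c' d' e' f' g' h' i' =
  mat3 (a * a' + b * d' + c * g') (a * b' + b * e' + c * h') (a * c' + b * f' + c * i')
       (d * a' + e * d' + f * g') (d * b' + e * e' + f * h') (d * c' + e * f' + f * i')
       (g * a' + h * d' + i * g') (g * b' + h * e' + i * h') (g * c' + h * f' + i * i') :> 'M[R]_3.
Proof.
rewrite -mulmxE; apply/matrixP => p q; rewrite !mxE !big_ord_recl big_ord0 !mxE addr0 /=.
by case: p => [[|[|[|p]]] Hp] //; case: q => [[|[|[|q]]] Hq] //=; rewrite addrA.
Qed.

Lemma piq (R : realType) : sin (pi / 4 : R) = cos (pi / 4) /\ cos (pi / 4 : R) ^+ 2 = 2^-1.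
Proof.
have cpos : 0 < cos (pi / 4 : R).
  apply: cos_gt0_pihalf; have := @pi_gt0 R; lra.
have e : sin (pi / 4 : R) = cos (pi / 4).
  have := @tan_piquarter R; rewrite /tan => h.
  by rewrite -[LHS](divfK (lt0r_neq0 cpos)) h mul1r.
split => //; have := cos2Dsin2 (pi / 4 : R); rewrite e => h.
apply: (@mulfI _ 2) => //; rewrite divff //; lra.
Qed.

Lemma Xm_mat3 (R : realType) (alpha beta a b : R) : Xm alpha beta a b =
  mat3 0 (- cos alpha) (- (b * sin alpha * cos beta))
       (cos alpha) 0 (- (a * sin alpha * sin beta))
       (b * sin alpha * cos beta) (a * sin alpha * sin beta) 0.
Proof.
rewrite /Xm /Fm /G1m /G2m !mat3_scale !mat3_add.
congr mat3; ring.
Qed.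


Definition Km {R : realType} (x y z : R) := mat3 0 (-z) y z 0 (-x) (-y) x 0.

Lemma Km_sq (R : realType) (x y z : R) : x ^+ 2 + y ^+ 2 + z ^+ 2 = 1 ->
  Km x y z ^+ 2 = mat3 (x * x - 1) (x * y) (x * z) (x * y) (y * y - 1) (y * z)
                       (x * z) (y * z) (z * z - 1).
Proof.
move=> <-; rewrite /Km expr2 mat3_mul; congr mat3; ring.
Qed.

Lemma Km3 (R : realType) (x y z : R) : x ^+ 2 + y ^+ 2 + z ^+ 2 = 1 ->
  Km x y z ^+ 3 = - Km x y z.
Proof.
move=> h; transitivity (- ((x ^+ 2 + y ^+ 2 + z ^+ 2) *: Km x y z)); last by rewrite h scale1r.
rewrite exprS expr2 /Km !mat3_mul mat3_scale mat3_opp; congr mat3; ring.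
Qed.

Lemma Km_rod (R : realType) (x y z t : R) : x ^+ 2 + y ^+ 2 + z ^+ 2 = 1 ->
  sin t *: Km x y z - cos t *: Km x y z ^+ 2 + (1 + Km x y z ^+ 2) =
  mat3 (cos t + (1 - cos t) * (x * x)) ((1 - cos t) * (x * y) - sin t * z)
       ((1 - cos t) * (x * z) + sin t * y)
       ((1 - cos t) * (x * y) + sin t * z) (cos t + (1 - cos t) * (y * y))
       ((1 - cos t) * (y * z) - sin t * x)
       ((1 - cos t) * (x * z) - sin t * y) ((1 - cos t) * (y * z) + sin t * x)
       (cos t + (1 - cos t) * (z * z)).
Proof.
move=> h; rewrite (Km_sq _ _ _ _ h) /Km mat3_one !mat3_scale mat3_opp !mat3_add; congr mat3; ring.
Qed.

Lemma Xm_Km (R : realType) (alpha a b : R) :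
  Xm alpha (pi / 4) a b =
  Km (a * sin alpha * cos (pi / 4)) (- (b * sin alpha * cos (pi / 4))) (cos alpha).
Proof.
have [e _] := piq R.
by rewrite Xm_mat3 e /Km opprK.
Qed.

Lemma case_gen {R : realType} (alpha a b t : R) : a ^+ 2 = 1 -> b ^+ 2 = 1 ->
  cos t = - (1 - cos alpha ^+ 2) / (1 + cos alpha ^+ 2) ->
  sin t = 2 * cos alpha / (1 + cos alpha ^+ 2) ->
  is_expm (t *: Xm alpha (pi / 4) a b)
   (mat3 0 ((- (a * b) * (1 - cos alpha ^+ 2) - 2 * cos alpha ^+ 2) / (1 + cos alpha ^+ 2))
         (2 * sin alpha * cos (pi / 4) * cos alpha * (a - b) / (1 + cos alpha ^+ 2))
         ((- (a * b) * (1 - cos alpha ^+ 2) + 2 * cos alpha ^+ 2) / (1 + cos alpha ^+ 2))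
         0
         (- (2 * sin alpha * cos (pi / 4) * cos alpha * (a + b)) / (1 + cos alpha ^+ 2))
         (2 * sin alpha * cos (pi / 4) * cos alpha * (a + b) / (1 + cos alpha ^+ 2))
         (2 * sin alpha * cos (pi / 4) * cos alpha * (a - b) / (1 + cos alpha ^+ 2))
         ((3 * cos alpha ^+ 2 - 1) / (1 + cos alpha ^+ 2))).
Proof.
move=> ha hb hct hst.
rewrite Xm_Km.
have [_ hq] := piq R.
have hs := sin2cos2 alpha.
have hD : 1 + cos alpha ^+ 2 != 0.
  by apply: lt0r_neq0; apply: (@lt_le_trans _ _ 1) => //; rewrite lerDl sqr_ge0.
move: (cos (pi / 4 : R)) (sin alpha) (cos alpha) hq hs hct hst hD => q sa ca hq hs hct hst hD.
have hxx : (a * sa * q) * (a * sa * q) = (1 - ca ^+ 2) / 2.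
  by transitivity (a ^+ 2 * sa ^+ 2 * q ^+ 2); [ring | rewrite ha hs hq; field].
have hyy : - (b * sa * q) * - (b * sa * q) = (1 - ca ^+ 2) / 2.
  by transitivity (b ^+ 2 * sa ^+ 2 * q ^+ 2); [ring | rewrite hb hs hq; field].
have hxy : (a * sa * q) * - (b * sa * q) = - (a * b) * (1 - ca ^+ 2) / 2.
  by transitivity (- (a * b) * sa ^+ 2 * q ^+ 2); [ring | rewrite hs hq; field].
have hn : (a * sa * q) ^+ 2 + (- (b * sa * q)) ^+ 2 + ca ^+ 2 = 1.
  by rewrite !expr2 hxx hyy; field.
have H := @expm_rod R _ t (Km3 _ _ _ _ hn).
rewrite (Km_rod _ _ _ _ _ hn) hxx hyy hxy hct hst in H.
apply: (eq_ind _ _ H); congr mat3; field; exact: hD.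
Qed.

Lemma trig_facts {R : realType} (alpha : R) : 0 < alpha -> alpha < pi / 4 ->
  [/\ cos (vfun alpha (smax alpha)) = - (1 - cos alpha ^+ 2) / (1 + cos alpha ^+ 2),
      sin (vfun alpha (smax alpha)) = 2 * cos alpha / (1 + cos alpha ^+ 2),
      cos (theta alpha) = (3 * cos alpha ^+ 2 - 1) / (1 + cos alpha ^+ 2)
    & sin (theta alpha) = - (4 * cos (pi / 4) * sin alpha * cos alpha) / (1 + cos alpha ^+ 2)].
Proof.
move=> a0 a1.
have pi0 := @pi_gt0 R.
have sa0 : 0 < sin alpha by apply: sin_gt0_pi; apply/andP; split; lra.
have ca0 : 0 < cos alpha by apply: cos_gt0_pihalf; apply/andP; split; lra.
have hs := sin2cos2 alpha.
have c2 : 0 < cos alpha ^+ 2 *+ 2 - 1.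
  rewrite -cos_mulr2n; apply: cos_gt0_pihalf; rewrite (_ : alpha *+ 2 = alpha + alpha); last by rewrite mulr2n.
  apply/andP; split; lra.
have [e hq] := piq R.
have q0 : 0 < cos (pi / 4 : R) by apply: cos_gt0_pihalf; apply/andP; split; lra.
have sq2 : Num.sqrt 2 = 2 * cos (pi / 4 : R).
  rewrite -[in RHS](@ger0_norm _ (2 * cos (pi / 4))); last by lra.
  by rewrite -sqrtr_sqr exprMn hq; congr Num.sqrt; field.
have D0 : 0 < 1 + cos alpha ^+ 2.
  by apply: (@lt_le_trans _ _ 1) => //; rewrite lerDl sqr_ge0.
have hD : 1 + cos alpha ^+ 2 != 0 by apply: lt0r_neq0.
have m_in : -1 <= - (sin alpha ^+ 2 / (1 + cos alpha ^+ 2)) <= 1.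
  have h1 : 0 <= sin alpha ^+ 2 / (1 + cos alpha ^+ 2).
    by apply: divr_ge0; [exact: sqr_ge0 | exact: ltW].
  have h2 : sin alpha ^+ 2 / (1 + cos alpha ^+ 2) <= 1.
    by rewrite ler_pdivrMr // mul1r hs; have := sqr_ge0 (cos alpha); lra.
  apply/andP; split; lra.
have csm : cos (smax alpha) = - (sin alpha ^+ 2 / (1 + cos alpha ^+ 2)).
  by rewrite /smax acosK // in_itv /=.
have ssm : sin (smax alpha) = 2 * cos alpha / (1 + cos alpha ^+ 2).
  rewrite /smax sin_acos //.
  rewrite (_ : 1 - _ = (2 * cos alpha / (1 + cos alpha ^+ 2)) ^+ 2).
    by rewrite sqrtr_sqr ger0_norm // divr_ge0 //; lra.
  rewrite hs; field; exact: hD.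
have e2a : sin (2 * alpha) = 2 * sin alpha * cos alpha.
  by rewrite mulr_natl sin_mulr2n; ring.
have c2a : cos (2 * alpha) = 2 * cos alpha ^+ 2 - 1.
  by rewrite mulr_natl cos_mulr2n; ring.
have c4a : cos (4 * alpha) = 2 * (2 * cos alpha ^+ 2 - 1) ^+ 2 - 1.
  by rewrite (_ : 4 * alpha = (2 * alpha) *+ 2) ?cos_mulr2n ?c2a; [ring | ring].
have c2s : cos (2 * smax alpha) = 2 * cos (smax alpha) ^+ 2 - 1.
  by rewrite mulr_natl cos_mulr2n; ring.
have hsc : (2 * sin alpha * cos alpha) ^+ 2 = 4 * cos alpha ^+ 2 * (1 - cos alpha ^+ 2).
  by rewrite -hs; ring.
have hs4 : sin alpha ^+ 4 = (1 - cos alpha ^+ 2) ^+ 2 by rewrite -hs; ring.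
have hr : (vd alpha - vA alpha (smax alpha) - vB alpha (smax alpha) - vC alpha (smax alpha))
     / (ve alpha - vA alpha (smax alpha) + vB alpha (smax alpha))
     = - (sin alpha ^+ 2 / (1 + cos alpha ^+ 2)).
  rewrite /vd /vA /vB /vC /ve e2a c2a c4a c2s csm ssm hsc hs4 hs.
  field; apply/andP; split => //.
  match goal with |- is_true (?X != 0) =>
    have -> : X = 4 * (3 * cos alpha ^+ 2 - 1) ^+ 2 by ring end.
  apply: lt0r_neq0; apply: mulr_gt0 => //; apply: exprn_gt0; lra.
have hv : vfun alpha (smax alpha) = smax alpha by rewrite /vfun hr.
have hw2 : 1 - (- (2 * (2 * cos (pi / 4)) * sin alpha * cos alpha) / (1 + cos alpha ^+ 2)) ^+ 2 = ((3 * cos alpha ^+ 2 - 1) / (1 + cos alpha ^+ 2)) ^+ 2.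
  rewrite (_ : (- (2 * (2 * cos (pi / 4)) * sin alpha * cos alpha) / (1 + cos alpha ^+ 2)) ^+ 2 = 16 * cos (pi / 4) ^+ 2 * sin alpha ^+ 2 * cos alpha ^+ 2
                         / (1 + cos alpha ^+ 2) ^+ 2); last by field.
  by rewrite hq hs; field.
have w_in : -1 <= (- (2 * (2 * cos (pi / 4)) * sin alpha * cos alpha) / (1 + cos alpha ^+ 2)) <= 1.
  have : 0 <= 1 - (- (2 * (2 * cos (pi / 4)) * sin alpha * cos alpha) / (1 + cos alpha ^+ 2)) ^+ 2 by rewrite hw2 sqr_ge0.
  move: (- (2 * (2 * cos (pi / 4)) * sin alpha * cos alpha) / (1 + cos alpha ^+ 2)) => w hw; apply/andP; split; nra.
have c3 : 0 <= (3 * cos alpha ^+ 2 - 1) / (1 + cos alpha ^+ 2).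
  by apply: divr_ge0; lra.
split.
- by rewrite hv csm hs mulNr.
- by rewrite hv ssm.
- by rewrite /theta sq2 cos_asin // hw2 sqrtr_sqr ger0_norm.
- by rewrite /theta sq2 asinK ?in_itv //=; field.
Qed.

Theorem lemma11 (R : realType) (alpha : R) :
  0 < alpha -> alpha < pi / 4 ->
  let beta := pi / 4 in
  let t := vfun alpha (smax alpha) in
  let c := cos (theta alpha) in
  let s := sin (theta alpha) in
  [/\ is_expm (t *: Xm alpha beta 1 1)
        (mat3 0 (-1) 0  c 0 s  (- s) 0 c),
      is_expm (t *: Xm alpha beta 1 (-1))
        (mat3 0 (- c) (- s)  1 0 0  0 (- s) c),
      is_expm (t *: Xm alpha beta (-1) (-1))
        (mat3 0 (-1) 0  c 0 (- s)  s 0 c)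
    & is_expm (t *: Xm alpha beta (-1) 1)
        (mat3 0 (- c) s  1 0 0  0 s c)].
Proof.
move=> a0 a1 beta t c s; subst beta t c s.
have [hct hst hc hs] := trig_facts _ a0 a1.
have hD : 1 + cos alpha ^+ 2 != 0.
  by apply: lt0r_neq0; apply: (@lt_le_trans _ _ 1) => //; rewrite lerDl sqr_ge0.
have h1 : (1 : R) ^+ 2 = 1 by ring.
have hm1 : (-1 : R) ^+ 2 = 1 by ring.
rewrite hc hs.
split.
- apply: (eq_ind _ (is_expm _) (@case_gen R alpha 1 1 _ h1 h1 hct hst)); congr mat3; field; exact: hD.
- apply: (eq_ind _ (is_expm _) (@case_gen R alpha 1 (-1) _ h1 hm1 hct hst)); congr mat3; field; exact: hD.
- apply: (eq_ind _ (is_expm _) (@case_gen R alpha (-1) (-1) _ hm1 hm1 hct hst)); congr mat3; field; exact: hD.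
- apply: (eq_ind _ (is_expm _) (@case_gen R alpha (-1) 1 _ hm1 h1 hct hst)); congr mat3; field; exact: hD.
Qed.
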